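(* Let $f:[0,1]\to[0,1]$ be a surjective continuous function. Then $f$ admits a splitting sequence if and only if $f^2=f\circ f$ admits a splitting sequence.
   Context: For a continuous surjective $g:[0,1]\to[0,1]$: a sequence $(T_n)_{n\in\mathbb N}$ of closed intervals $T_n\subsetneq[0,1]$ (possibly degenerate) is tight for $g$ if $g(T_{n+1})=T_n$ for every $n$ and $T_n$ is nondegenerate for all sufficiently large $n$. A tight sequence $(T_n)$, $T_n=[l_n,r_n]$, is a splitting sequence admitted by $g$ if there are an infinite set $N\subseteq\mathbb N$ and nondegenerate closed intervals $S_n\subseteq[0,1]$ ($n\in N$) with $S_n\cap T_n\subseteq\{l_n,r_n\}$ and $g(S_n)=g(T_n)$ for all $n\in N$. *)

(* Defs.v *)
From Stdlib Require Import Reals.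
Open Scope R_scope.

Definition Icc (a b : R) (x : R) : Prop := a <= x <= b.

Definition image_Icc_eq (g : R -> R) (a b c d : R) : Prop :=
  forall y, (exists x, Icc a b x /\ g x = y) <-> Icc c d y.

Definition cont01 (g : R -> R) : Prop :=
  forall x, Icc 0 1 x -> forall eps, 0 < eps ->
    exists delta, 0 < delta /\
      forall y, Icc 0 1 y -> Rabs (y - x) < delta -> Rabs (g y - g x) < eps.

Definition surj01 (g : R -> R) : Prop := image_Icc_eq g 0 1 0 1.

Definition proper_subinterval (l r : R) : Prop :=
  0 <= l /\ l <= r /\ r <= 1 /\ ~ (l = 0 /\ r = 1).

Definition tight (g : R -> R) (l r : nat -> R) : Prop :=
  (forall n, proper_subinterval (l n) (r n)) /\
  (forall n, image_Icc_eq g (l (S n)) (r (S n)) (l n) (r n)) /\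
  (exists N, forall n, (N <= n)%nat -> l n < r n).

Definition splitting_sequence (g : R -> R) (l r : nat -> R) : Prop :=
  tight g l r /\
  exists (Nset : nat -> Prop) (a b : nat -> R),
    (forall m, exists n, (m <= n)%nat /\ Nset n) /\
    (forall n, Nset n ->
       0 <= a n /\ a n < b n /\ b n <= 1 /\
       (forall x, Icc (a n) (b n) x -> Icc (l n) (r n) x -> x = l n \/ x = r n) /\
       (forall y, (exists x, Icc (a n) (b n) x /\ g x = y) <->
                  (exists x, Icc (l n) (r n) x /\ g x = y))).

Definition admits_splitting_sequence (g : R -> R) : Prop :=
  exists l r : nat -> R, splitting_sequence g l r.

(* Main.v *)
Require Import Defs.
From Stdlib Require Import Reals Lra Lia Classical ClassicalEpsilon Arith.
Open Scope R_scope.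

Definition ctn (h : R -> R) : Prop := forall x eps, 0 < eps -> exists d, 0 < d /\
  forall y, Rabs (y - x) < d -> Rabs (h y - h x) < eps.

Lemma ctn_cont h : ctn h -> continuity h.
Proof.
  intros H x. unfold continuity_pt, continue_in, limit1_in, limit_in. simpl.
  intros eps He. destruct (H x eps He) as [d [Hd Hy]]. exists d; split; [lra|].
  intros y [_ Hy2]. unfold R_dist in *. apply Hy; exact Hy2.
Qed.

Lemma ctn_opp h : ctn h -> ctn (fun x => - h x).
Proof.
  intros H x eps He. destruct (H x eps He) as [d [Hd Hy]]. exists d; split; [lra|].
  intros y Hyx. replace (- h y - - h x) with (- (h y - h x)) by ring. rewrite Rabs_Ropp. auto.
Qed.

Lemma ctn_compopp h : ctn h -> ctn (fun x => h (- x)).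
Proof.
  intros H x eps He. destruct (H (-x) eps He) as [d [Hd Hy]]. exists d; split; [lra|].
  intros y Hyx. apply Hy. replace (- y - - x) with (- (y - x)) by ring. rewrite Rabs_Ropp. auto.
Qed.

Lemma hIVT h a b y : ctn h -> a <= b -> (h a <= y <= h b \/ h b <= y <= h a) ->
  exists x, a <= x <= b /\ h x = y.
Proof.
  intros H Hab Hy.
  assert (Hc : continuity (fun x => h x - y)).
  { apply continuity_minus. apply ctn_cont; auto. apply continuity_const. intros u v; auto. }
  destruct (IVT_cor (fun x => h x - y) a b Hc Hab) as [z [Hz1 Hz2]].
  { destruct Hy as [[H1 H2]|[H1 H2]].
    - assert (h a - y <= 0) by lra. assert (0 <= h b - y) by lra.
      replace ((h a - y) * (h b - y)) with (- ((y - h a) * (h b - y))) by ring.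
      assert (0 <= (y - h a) * (h b - y)) by (apply Rmult_le_pos; lra). lra.
    - replace ((h a - y) * (h b - y)) with (- ((h a - y) * (y - h b))) by ring.
      assert (0 <= (h a - y) * (y - h b)) by (apply Rmult_le_pos; lra). lra. }
  exists z; split; auto; lra.
Qed.

Lemma hIL h a b : ctn h -> a <= b -> exists c d, c <= d /\
  forall y, (exists x, a <= x <= b /\ h x = y) <-> c <= y <= d.
Proof.
  intros H Hab.
  assert (Hp : forall c, a <= c <= b -> continuity_pt h c) by (intros; apply ctn_cont; auto).
  destruct (continuity_ab_maj h a b Hab Hp) as [M [HM1 HM2]].
  destruct (continuity_ab_min h a b Hab Hp) as [m [Hm1 Hm2]].
  exists (h m), (h M). split. apply HM1; lra.
  intros y; split.
  - intros [x [Hx <-]]. split; [apply Hm1|apply HM1]; auto.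
  - intros Hy. destruct (Rle_dec m M).
    + destruct (hIVT h m M y H r) as [x [Hx Hx2]]. left; lra. exists x; split; auto; lra.
    + destruct (hIVT h M m y H) as [x [Hx Hx2]]. lra. right; lra. exists x; split; auto; lra.
Qed.

Lemma lastpt h a b c : ctn h -> a <= b -> h a = c ->
  exists s, a <= s <= b /\ h s = c /\ forall x, s < x <= b -> h x <> c.
Proof.
  intros H Hab Ha.
  set (E := fun x => a <= x <= b /\ h x = c).
  assert (Hb : bound E) by (exists b; intros x [Hx _]; lra).
  assert (Hne : exists x, E x) by (exists a; split; [lra|auto]).
  destruct (completeness E Hb Hne) as [s [Hs1 Hs2]].
  assert (Has : a <= s) by (apply Hs1; split; [lra|auto]).
  assert (Hsb : s <= b) by (apply Hs2; intros x [Hx _]; lra).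
  exists s. split; [lra|]. split.
  - destruct (Req_dec (h s) c) as [e|ne]; auto. exfalso.
    assert (He : 0 < Rabs (h s - c)) by (apply Rabs_pos_lt; lra).
    destruct (H s _ He) as [d [Hd Hy]].
    assert (Hex : exists x, E x /\ s - d < x).
    { apply NNPP; intro Hn. assert (s <= s - d); [|lra].
      apply Hs2. intros x Ex. apply Rnot_lt_le. intro Hlt. apply Hn. exists x; auto. }
    destruct Hex as [x [[Hx1 Hx2] Hx3]].
    assert (x <= s) by (apply Hs1; split; auto).
    assert (Rabs (x - s) < d) by (rewrite Rabs_left1; lra).
    specialize (Hy x H1). rewrite Hx2 in Hy.
    replace (c - h s) with (- (h s - c)) in Hy by ring. rewrite Rabs_Ropp in Hy. lra.
  - intros x Hx Hxc. assert (x <= s) by (apply Hs1; split; [lra|auto]). lra.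
Qed.

Lemma firstpt h a b d : ctn h -> a <= b -> h b = d ->
  exists t, a <= t <= b /\ h t = d /\ forall x, a <= x < t -> h x <> d.
Proof.
  intros H Hab Hb.
  destruct (lastpt (fun x => h (- x)) (-b) (-a) d (ctn_compopp h H)) as [s [Hs1 [Hs2 Hs3]]].
  lra. rewrite Ropp_involutive; auto.
  exists (- s). split; [lra|]. split; auto.
  intros x Hx. specialize (Hs3 (- x)). rewrite Ropp_involutive in Hs3. apply Hs3; lra.
Qed.

Lemma hSSL_lt h p q c d : ctn h -> p < q -> h p = c -> h q = d -> c < d ->
  exists y1 y2, p <= y1 < y2 /\ y2 <= q /\ h y1 = c /\ h y2 = d /\
    forall y, (exists x, y1 <= x <= y2 /\ h x = y) <-> c <= y <= d.
Proof.
  intros H Hpq Hp Hq Hcd.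
  destruct (lastpt h p q c H) as [s [Hs1 [Hs2 Hs3]]]; try lra.
  assert (Hsq : s < q) by (destruct (Req_dec s q); [subst; lra|lra]).
  destruct (firstpt h s q d H) as [t [Ht1 [Ht2 Ht3]]]; try lra.
  assert (Hst : s < t) by (destruct (Req_dec s t); [subst; lra|lra]).
  exists s, t. split; [lra|]. split; [lra|]. split; auto. split; auto.
  intros y; split.
  - intros [x [Hx <-]]. split.
    + apply Rnot_lt_le; intro Hlt.
      assert (Hxs : s < x) by (destruct (Req_dec x s); [subst; lra|lra]).
      destruct (hIVT h x q c H) as [z [Hz1 Hz2]]. lra. left; lra.
      apply (Hs3 z); auto; lra.
    + apply Rnot_lt_le; intro Hlt.
      assert (Hxt : x < t) by (destruct (Req_dec x t); [subst; lra|lra]).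
      destruct (hIVT h s x d H) as [z [Hz1 Hz2]]. lra. left; lra.
      apply (Ht3 z); auto; lra.
  - intros Hy. destruct (hIVT h s t y H) as [z [Hz1 Hz2]]. lra. left; lra.
    exists z; auto.
Qed.

Lemma hSSL h p q c d : ctn h -> h p = c -> h q = d -> c < d ->
  exists y1 y2, Rmin p q <= y1 < y2 /\ y2 <= Rmax p q /\
    ((h y1 = c /\ h y2 = d) \/ (h y1 = d /\ h y2 = c)) /\
    forall y, (exists x, y1 <= x <= y2 /\ h x = y) <-> c <= y <= d.
Proof.
  intros H Hp Hq Hcd.
  destruct (Rtotal_order p q) as [Hlt|[Heq|Hgt]].
  - destruct (hSSL_lt h p q c d H Hlt Hp Hq Hcd) as [y1 [y2 [A1 [A2 [A3 [A4 A5]]]]]].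
    exists y1, y2. rewrite Rmin_left, Rmax_right by lra. split; [lra|]. split; [lra|]. split; [left; auto|exact A5].
  - subst. lra.
  - destruct (hSSL_lt (fun x => - h x) q p (-d) (-c) (ctn_opp h H) Hgt) as [y1 [y2 [A1 [A2 [A3 [A4 A5]]]]]];
      try lra.
    exists y1, y2. rewrite Rmin_right, Rmax_left by lra. split; [lra|]. split; [lra|].
    split. right; lra.
    intros y; split.
    + intros [x [Hx Hxy]]. assert (-d <= -y <= -c); [|lra].
      apply A5. exists x; split; auto; lra.
    + intros Hy. destruct (proj2 (A5 (-y))) as [x [Hx Hxy]]. lra.
      exists x; split; auto; lra.
Qed.

Definition clamp (x : R) : R := Rmax 0 (Rmin 1 x).

Lemma clamp_in x : 0 <= clamp x <= 1.
Proof. unfold clamp, Rmax, Rmin; repeat destruct Rle_dec; lra. Qed.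

Lemma clamp_id x : 0 <= x <= 1 -> clamp x = x.
Proof. intros. unfold clamp, Rmax, Rmin; repeat destruct Rle_dec; lra. Qed.

Lemma clamp_lip x y : Rabs (clamp y - clamp x) <= Rabs (y - x).
Proof.
  unfold clamp, Rmax, Rmin; repeat destruct Rle_dec;
  unfold Rabs; repeat destruct Rcase_abs; lra.
Qed.

Lemma cont01_ctn f : cont01 f -> ctn (fun x => f (clamp x)).
Proof.
  intros H x eps He. destruct (H (clamp x) (clamp_in x) eps He) as [d [Hd Hy]].
  exists d; split; auto. intros y Hyx. apply Hy. apply clamp_in.
  pose proof (clamp_lip x y). lra.
Qed.

Lemma fIVT f a b y : cont01 f -> 0 <= a -> a <= b -> b <= 1 ->
  (f a <= y <= f b \/ f b <= y <= f a) -> exists x, Icc a b x /\ f x = y.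
Proof.
  intros H H0 Hab H1 Hy.
  destruct (hIVT (fun x => f (clamp x)) a b y (cont01_ctn f H) Hab) as [x [Hx Hxy]].
  rewrite !clamp_id by lra. auto.
  exists x. rewrite clamp_id in Hxy by lra. split; auto.
Qed.

Lemma fIL f a b : cont01 f -> 0 <= a -> a <= b -> b <= 1 ->
  exists c d, c <= d /\ image_Icc_eq f a b c d.
Proof.
  intros H H0 Hab H1.
  destruct (hIL (fun x => f (clamp x)) a b (cont01_ctn f H) Hab) as [c [d [Hcd Hi]]].
  exists c, d. split; auto. intros y. unfold Icc. rewrite <- Hi. split.
  - intros [x [Hx Hxy]]. exists x. rewrite clamp_id by lra. auto.
  - intros [x [Hx Hxy]]. exists x. rewrite clamp_id in Hxy by lra. auto.
Qed.

Lemma fSUB f a b c d : cont01 f -> 0 <= a -> b <= 1 -> c < d ->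
  (forall y, c <= y <= d -> exists x, Icc a b x /\ f x = y) ->
  exists y1 y2, a <= y1 < y2 /\ y2 <= b /\
    ((f y1 = c /\ f y2 = d) \/ (f y1 = d /\ f y2 = c)) /\ image_Icc_eq f y1 y2 c d.
Proof.
  intros H H0 H1 Hcd Hs.
  destruct (Hs c) as [p [Hp Hpc]]. lra.
  destruct (Hs d) as [q [Hq Hqd]]. lra.
  unfold Icc in *.
  destruct (hSSL (fun x => f (clamp x)) p q c d (cont01_ctn f H)) as [y1 [y2 [A1 [A2 [A3 A4]]]]];
    try (rewrite clamp_id by lra; auto); auto.
  assert (Hmin : a <= Rmin p q) by (unfold Rmin; destruct Rle_dec; lra).
  assert (Hmax : Rmax p q <= b) by (unfold Rmax; destruct Rle_dec; lra).
  exists y1, y2. split; [lra|]. split; [lra|].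
  rewrite !clamp_id in A3 by lra. split; auto.
  intros y. unfold Icc. rewrite <- A4. split.
  - intros [x [Hx Hxy]]. exists x. rewrite clamp_id by lra. auto.
  - intros [x [Hx Hxy]]. exists x. rewrite clamp_id in Hxy by lra. auto.
Qed.

Lemma f_in01 f x : surj01 f -> Icc 0 1 x -> Icc 0 1 (f x).
Proof. intros Hs Hx. apply (Hs (f x)). exists x; auto. Qed.

Lemma img_comp f a b c d y : image_Icc_eq f a b c d ->
  ((exists x, Icc a b x /\ f (f x) = y) <-> (exists w, Icc c d w /\ f w = y)).
Proof.
  intros H. split.
  - intros [x [Hx Hxy]]. exists (f x). split; auto. apply H. exists x; auto.
  - intros [w [Hw Hwy]]. destruct (proj2 (H w) Hw) as [x [Hx Hxw]]. exists x. subst; auto.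
Qed.

Lemma icc_eq_ends c d c' d' : c <= d -> c' <= d' ->
  (forall y, Icc c d y <-> Icc c' d' y) -> c = c' /\ d = d'.
Proof.
  intros H1 H2 H. unfold Icc in H.
  pose proof (proj1 (H c)). pose proof (proj1 (H d)).
  pose proof (proj2 (H c')). pose proof (proj2 (H d')). 
  assert (c' <= c <= d') by (apply H0; lra).
  assert (c' <= d <= d') by (apply H3; lra).
  assert (c <= c' <= d) by (apply H4; lra).
  assert (c <= d' <= d) by (apply H5; lra). lra.
Qed.

Definition nonov a b c d := forall x, Icc a b x -> Icc c d x -> x = c \/ x = d.
Definition SplitAt (f : R -> R) c d := exists a b, 0 <= a /\ a < b /\ b <= 1 /\ nonov a b c d /\
  (forall y, (exists x, Icc a b x /\ f x = y) <-> (exists x, Icc c d x /\ f x = y)).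

Definition StepConcl (f : R -> R) l' r' u v (Sp : Prop) :=
  exists yl yr xl xr, l' <= xl /\ xl < xr /\ xr <= r' /\ 0 <= yl /\ yl < yr /\ yr <= 1 /\
    image_Icc_eq f xl xr yl yr /\ image_Icc_eq f yl yr u v /\
    (Sp -> SplitAt f yl yr \/ SplitAt f xl xr).

Lemma finish f l' r' a1 a2 c1 c2 : cont01 f -> 0 <= l' -> r' <= 1 ->
  image_Icc_eq f l' r' a1 a2 -> a1 <= c1 -> c1 < c2 -> c2 <= a2 ->
  exists xl xr, l' <= xl /\ xl < xr /\ xr <= r' /\ image_Icc_eq f xl xr c1 c2.
Proof.
  intros hc H0 H1 HA Hc1 Hc Hc2.
  destruct (fSUB f l' r' c1 c2 hc H0 H1 Hc) as [x1 [x2 [B1 [B2 [B3 B4]]]]].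
  { intros y Hy. apply HA. unfold Icc; lra. }
  exists x1, x2. split; [lra|]. split; [lra|]. split; [lra|]. exact B4.
Qed.

Lemma packY f l' r' a1 a2 c1 c2 u v (Sp : Prop) : cont01 f -> 0 <= l' -> r' <= 1 ->
  image_Icc_eq f l' r' a1 a2 -> 0 <= a1 -> a2 <= 1 -> a1 <= c1 -> c1 < c2 -> c2 <= a2 ->
  image_Icc_eq f c1 c2 u v -> (Sp -> SplitAt f c1 c2) -> StepConcl f l' r' u v Sp.
Proof.
  intros hc H0 H1 HA Ha1 Ha2 Hc1 Hc Hc2 HC HS.
  destruct (finish f l' r' a1 a2 c1 c2 hc H0 H1 HA Hc1 Hc Hc2) as [x1 [x2 [B1 [B2 [B3 B4]]]]].
  exists c1, c2, x1, x2. split; [lra|]. split; [lra|]. split; [lra|]. split; [lra|].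
  split; [lra|]. split; [lra|]. split; [exact B4|]. split; [exact HC|].
  intros HSp; left; auto.
Qed.

Lemma packX f l' r' a1 a2 a b s1 s2 c1 c2 u v (Sp : Prop) : cont01 f -> 0 <= l' -> r' <= 1 ->
  image_Icc_eq f l' r' a1 a2 -> 0 <= a1 -> a2 <= 1 -> a1 <= c1 -> c1 < c2 -> c2 <= a2 ->
  image_Icc_eq f c1 c2 u v ->
  0 <= a -> b <= 1 -> nonov a b l' r' -> image_Icc_eq f a b s1 s2 -> s1 <= c1 -> c2 <= s2 ->
  StepConcl f l' r' u v Sp.
Proof.
  intros hc H0 H1 HA Ha1 Ha2 Hc1 Hc Hc2 HC Ha Hb Hab HS Hs1 Hs2.
  destruct (finish f l' r' a1 a2 c1 c2 hc H0 H1 HA Hc1 Hc Hc2) as [x1 [x2 [B1 [B2 [B3 B4]]]]].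
  destruct (fSUB f a b c1 c2 hc Ha Hb Hc) as [e1 [e2 [E1 [E2 [E3 E4]]]]].
  { intros y Hy. apply HS. unfold Icc; lra. }
  exists c1, c2, x1, x2. split; [lra|]. split; [lra|]. split; [lra|]. split; [lra|].
  split; [lra|]. split; [lra|]. split; [exact B4|]. split; [exact HC|].
  intros _. right. exists e1, e2. split; [lra|]. split; [lra|]. split; [lra|]. split.
  - intros x Hx1 Hx2. unfold Icc in *. destruct (Hab x) as [->| ->]; unfold Icc; try lra.
  - intros y. rewrite (E4 y), (B4 y). tauto.
Qed.

Lemma splitY f c1 c2 e1 e2 u v : 0 <= e1 -> e1 < e2 -> e2 <= 1 -> nonov e1 e2 c1 c2 ->
  image_Icc_eq f e1 e2 u v -> image_Icc_eq f c1 c2 u v -> SplitAt f c1 c2.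
Proof.
  intros H1 H2 H3 H4 H5 H6. exists e1, e2. split; [auto|]. split; [auto|]. split; [auto|]. split; [auto|].
  intros y. rewrite (H5 y), (H6 y). tauto.
Qed.

Lemma ivt_uv f p q u v : cont01 f -> 0 <= p -> p <= q -> q <= 1 -> u < v ->
  ((f p = u /\ f q = v) \/ (f p = v /\ f q = u)) ->
  forall y, u <= y <= v -> exists x, Icc p q x /\ f x = y.
Proof.
  intros hc H0 Hpq H1 Huv He y Hy. apply fIVT; auto. lra.
Qed.

Lemma img_sub f c1 c2 y1 y2 u v : cont01 f -> 0 <= c1 -> c1 <= c2 -> c2 <= 1 -> u < v ->
  y1 <= c1 -> c2 <= y2 -> image_Icc_eq f y1 y2 u v ->
  ((f c1 = u /\ f c2 = v) \/ (f c1 = v /\ f c2 = u)) -> image_Icc_eq f c1 c2 u v.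
Proof.
  intros hc H0 H12 H1 Huv Hy1 Hy2 HY He y. split.
  - intros [x [Hx Hxy]]. apply HY. exists x. unfold Icc in *; split; auto; lra.
  - intros Hy. apply (ivt_uv f c1 c2 u v); auto.
Qed.

Lemma step f l' r' Tl Tr u v (Sp : Prop) : cont01 f -> surj01 f ->
  0 <= l' -> l' <= r' -> r' <= 1 ->
  image_Icc_eq (fun x => f (f x)) l' r' Tl Tr ->
  Tl <= u -> u < v -> v <= Tr ->
  (Sp -> exists a b, 0 <= a /\ a < b /\ b <= 1 /\ nonov a b l' r' /\
     forall y, (exists x, Icc a b x /\ f (f x) = y) <-> (exists x, Icc l' r' x /\ f (f x) = y)) ->
  StepConcl f l' r' u v Sp.
Proof.
  intros hc hs H0 Hlr H1 Himg Hu Huv Hv HSp.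
  destruct (fIL f l' r' hc H0 Hlr H1) as [a1 [a2 [Ha12 HA]]].
  assert (Ha1 : 0 <= a1 <= 1).
  { destruct (proj2 (HA a1)) as [x [Hx <-]]. unfold Icc; lra. apply f_in01; auto. unfold Icc in *; lra. }
  assert (Ha2 : 0 <= a2 <= 1).
  { destruct (proj2 (HA a2)) as [x [Hx <-]]. unfold Icc; lra. apply f_in01; auto. unfold Icc in *; lra. }
  assert (HfA : image_Icc_eq f a1 a2 Tl Tr).
  { intros y. rewrite <- (img_comp f l' r' a1 a2 y HA). apply Himg. }
  destruct (fSUB f a1 a2 u v hc) as [y1 [y2 [Y1 [Y2 [HYe HY]]]]]; try lra.
  { intros y Hy. apply HfA. unfold Icc; lra. }
  destruct (classic Sp) as [sp|nsp].
  2:{ apply (packY f l' r' a1 a2 y1 y2 u v Sp hc H0 H1 HA); auto; try lra. tauto. }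
  destruct (HSp sp) as [a [b [Ha [Hab [Hb [Hnov Hsab]]]]]].
  destruct (fIL f a b hc Ha) as [s1 [s2 [Hs12 HS]]]; try lra.
  assert (Hs1 : 0 <= s1 <= 1).
  { destruct (proj2 (HS s1)) as [x [Hx <-]]. unfold Icc; lra. apply f_in01; auto. unfold Icc in *; lra. }
  assert (Hs2 : 0 <= s2 <= 1).
  { destruct (proj2 (HS s2)) as [x [Hx <-]]. unfold Icc; lra. apply f_in01; auto. unfold Icc in *; lra. }
  assert (HfS : image_Icc_eq f s1 s2 Tl Tr).
  { intros y. rewrite <- (img_comp f a b s1 s2 y HS). rewrite Hsab. apply Himg. }
  destruct (fSUB f s1 s2 u v hc) as [k1 [k2 [K1 [K2 [HKe HK]]]]]; try lra.
  { intros y Hy. apply HfS. unfold Icc; lra. }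
  destruct (classic (nonov k1 k2 y1 y2)) as [nv|nnv].
  { apply (packY f l' r' a1 a2 y1 y2 u v Sp hc H0 H1 HA); auto; try lra.
    intros _. apply (splitY f y1 y2 k1 k2 u v); auto; lra. }
  unfold nonov in nnv. apply not_all_ex_not in nnv. destruct nnv as [x nnv].
  apply imply_to_and in nnv. destruct nnv as [Hxk nnv].
  apply imply_to_and in nnv. destruct nnv as [Hxy nnv].
  apply not_or_and in nnv. destruct nnv as [nx1 nx2]. unfold Icc in Hxk, Hxy.
  destruct (Rle_dec k1 y1) as [c1|c1]; destruct (Rle_dec y2 k2) as [c2|c2].
  -
    apply (packX f l' r' a1 a2 a b s1 s2 y1 y2 u v Sp hc H0 H1 HA); auto; lra.
  -
    destruct (Req_dec k1 y1) as [e|ne].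
    + subst k1. apply (packX f l' r' a1 a2 a b s1 s2 y1 k2 u v Sp hc H0 H1 HA); auto; lra.
    + destruct (Req_dec (f k1) (f y1)) as [e|ne'].
      * apply (packX f l' r' a1 a2 a b s1 s2 y1 k2 u v Sp hc H0 H1 HA); auto; try lra.
        apply (img_sub f y1 k2 k1 k2 u v); auto; try lra.
      * destruct (fSUB f k1 y1 u v hc) as [e1 [e2 [E1 [E2 [_ HE]]]]]; try lra.
        { apply ivt_uv; auto; lra. }
        apply (packY f l' r' a1 a2 y1 y2 u v Sp hc H0 H1 HA); auto; try lra.
        intros _. apply (splitY f y1 y2 e1 e2 u v); auto; try lra.
        intros z Hz1 Hz2. unfold Icc in *. left; lra.
  -
    destruct (Req_dec y2 k2) as [e|ne].
    + subst k2. apply (packX f l' r' a1 a2 a b s1 s2 k1 y2 u v Sp hc H0 H1 HA); auto; lra.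
    + destruct (Req_dec (f y2) (f k2)) as [e|ne'].
      * apply (packX f l' r' a1 a2 a b s1 s2 k1 y2 u v Sp hc H0 H1 HA); auto; try lra.
        apply (img_sub f k1 y2 k1 k2 u v); auto; try lra.
      * destruct (fSUB f y2 k2 u v hc) as [e1 [e2 [E1 [E2 [_ HE]]]]]; try lra.
        { apply ivt_uv; auto; lra. }
        apply (packY f l' r' a1 a2 y1 y2 u v Sp hc H0 H1 HA); auto; try lra.
        intros _. apply (splitY f y1 y2 e1 e2 u v); auto; try lra.
        intros z Hz1 Hz2. unfold Icc in *. right; lra.
  -
    apply (packX f l' r' a1 a2 a b s1 s2 k1 k2 u v Sp hc H0 H1 HA); auto; try lra.
Qed.

Lemma dep_choice {A : Type} (Inv : nat -> A -> Prop) (P : nat -> A -> A -> Prop) (x0 : A) :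
  Inv 0%nat x0 -> (forall m x, Inv m x -> exists y, P m x y /\ Inv (S m) y) ->
  exists s : nat -> A, s 0%nat = x0 /\ forall m, Inv m (s m) /\ P m (s m) (s (S m)).
Proof.
  intros H0 H.
  assert (H' : forall m x, exists y, Inv m x -> P m x y /\ Inv (S m) y).
  { intros m x. destruct (classic (Inv m x)) as [i|ni].
    - destruct (H m x i) as [y Hy]. exists y; auto.
    - exists x; intro; contradiction. }
  set (F := fun m x => proj1_sig (constructive_indefinite_description _ (H' m x))).
  assert (HF : forall m x, Inv m x -> P m x (F m x) /\ Inv (S m) (F m x)).
  { intros m x. unfold F. destruct (constructive_indefinite_description _ (H' m x)); simpl; auto. }
  set (s := fix s (m : nat) : A := match m with O => x0 | S k => F k (s k) end).
  exists s. split; auto.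
  assert (Hi : forall m, Inv m (s m)).
  { induction m; simpl; auto. apply HF; auto. }
  intros m; split; auto. simpl. apply HF; auto.
Qed.

Lemma even2 m : Nat.even (2 * m) = true.
Proof. apply Nat.even_spec. exists m; lia. Qed.
Lemma odd2 m : Nat.even (S (2 * m)) = false.
Proof. rewrite Nat.even_succ. rewrite <- Nat.negb_even. rewrite even2. auto. Qed.

Lemma choice_ab (Q : nat -> Prop) (Pr : nat -> R -> R -> Prop) :
  (forall n, Q n -> exists a b, Pr n a b) ->
  exists a b : nat -> R, forall n, Q n -> Pr n (a n) (b n).
Proof.
  intros H.
  assert (H' : forall n, exists p : R * R, Q n -> Pr n (fst p) (snd p)).
  { intros n. destruct (classic (Q n)) as [q|nq].
    - destruct (H n q) as [a [b Hab]]. exists (a, b); auto.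
    - exists (0, 0); intro; contradiction. }
  exists (fun n => fst (proj1_sig (constructive_indefinite_description _ (H' n)))).
  exists (fun n => snd (proj1_sig (constructive_indefinite_description _ (H' n)))).
  intros n q. destruct (constructive_indefinite_description _ (H' n)); simpl; auto.
Qed.

Lemma not_full l r u v : proper_subinterval l r -> l <= u -> v <= r -> ~ (u = 0 /\ v = 1).
Proof. unfold proper_subinterval. intros [H1 [H2 [H3 H4]]] Hu Hv [-> ->]. apply H4; lra. Qed.

Lemma back f (hc : cont01 f) (hs : surj01 f) :
  admits_splitting_sequence (fun x => f (f x)) -> admits_splitting_sequence f.
Proof.
  intros [l [r [[Hprop [Himg [N0 HN0]]] [Ns [a [b [Hinf Hsp]]]]]]].
  set (Inv := fun m (st : (R * R) * (R * R)) =>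
    l (N0 + m)%nat <= fst (snd st) /\ fst (snd st) < snd (snd st) /\ snd (snd st) <= r (N0 + m)%nat).
  set (P := fun m (st st' : (R * R) * (R * R)) =>
    image_Icc_eq f (fst (snd st')) (snd (snd st')) (fst (fst st')) (snd (fst st')) /\
    image_Icc_eq f (fst (fst st')) (snd (fst st')) (fst (snd st)) (snd (snd st)) /\
    0 <= fst (fst st') /\ fst (fst st') < snd (fst st') /\ snd (fst st') <= 1 /\
    (Ns (S (N0 + m)) -> SplitAt f (fst (fst st')) (snd (fst st')) \/ SplitAt f (fst (snd st')) (snd (snd st')))).
  destruct (dep_choice Inv P ((0, 0), (l N0, r N0))) as [s [Hs0 Hs]].
  { unfold Inv; simpl. rewrite Nat.add_0_r. specialize (HN0 N0 (le_n _)).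
    split; [lra|]. split; lra. }
  { intros m [[yl yr] [u v]] [Hu [Huv Hv]]. simpl in *.
    destruct (Hprop (S (N0 + m))) as [Q1 [Q2 [Q3 Q4]]].
    destruct (step f (l (S (N0 + m))) (r (S (N0 + m))) (l (N0 + m)%nat) (r (N0 + m)%nat) u v
               (Ns (S (N0 + m))) hc hs Q1 Q2 Q3 (Himg _) Hu Huv Hv) as
      [yl' [yr' [xl [xr [B1 [B2 [B3 [B4 [B5 [B6 [B7 [B8 B9]]]]]]]]]]]].
    { intros HN. destruct (Hsp _ HN) as [C1 [C2 [C3 [C4 C5]]]].
      exists (a (S (N0 + m))), (b (S (N0 + m))). exact (conj C1 (conj C2 (conj C3 (conj C4 C5)))). }
    exists ((yl', yr'), (xl, xr)). unfold P, Inv; simpl.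
    split. { exact (conj B7 (conj B8 (conj B4 (conj B5 (conj B6 B9))))). }
    rewrite Nat.add_succ_r. exact (conj B1 (conj B2 B3)). }
  set (Lf := fun j => if Nat.even j then fst (snd (s (Nat.div2 j))) else fst (fst (s (S (Nat.div2 j))))).
  set (Rf := fun j => if Nat.even j then snd (snd (s (Nat.div2 j))) else snd (fst (s (S (Nat.div2 j))))).
  assert (LE : forall m, Lf (2 * m)%nat = fst (snd (s m)) /\ Rf (2 * m)%nat = snd (snd (s m))).
  { intros m. unfold Lf, Rf. rewrite even2, Nat.div2_double. auto. }
  assert (LO : forall m, Lf (S (2 * m)) = fst (fst (s (S m))) /\ Rf (S (2 * m)) = snd (fst (s (S m)))).
  { intros m. unfold Lf, Rf. rewrite odd2, Nat.div2_succ_double. auto. }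
  assert (Hsurj : forall m, ~ (fst (fst (s (S m))) = 0 /\ snd (fst (s (S m))) = 1)).
  { intros m [E1 E2]. destruct (Hs m) as [[I1 [I2 I3]] [_ [P2 _]]].
    rewrite E1, E2 in P2.
    destruct (icc_eq_ends 0 1 (fst (snd (s m))) (snd (snd (s m)))) as [F1 F2]; try lra.
    { intros y. rewrite <- (P2 y). symmetry; apply hs. }
    apply (not_full _ _ _ _ (Hprop (N0 + m)%nat) I1 I3). auto. }
  exists Lf, Rf. split; [split; [|split]|].
  - intros j. destruct (Nat.Even_or_Odd j) as [[m ->]|[m ->]].
    + destruct (LE m) as [-> ->]. destruct (Hs m) as [[I1 [I2 I3]] _].
      destruct (Hprop (N0 + m)%nat) as [Q1 [Q2 [Q3 Q4]]].
      split; [lra|]. split; [lra|]. split; [lra|].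
      apply (not_full _ _ _ _ (Hprop (N0 + m)%nat) I1 I3).
    + replace (2 * m + 1)%nat with (S (2 * m)) by lia.
      destruct (LO m) as [-> ->]. destruct (Hs m) as [_ [_ [_ [P3 [P4 [P5 _]]]]]].
      split; [lra|]. split; [lra|]. split; [lra|]. apply Hsurj.
  - intros j. destruct (Nat.Even_or_Odd j) as [[m ->]|[m ->]].
    + destruct (LE m) as [-> ->]. destruct (LO m) as [-> ->].
      destruct (Hs m) as [_ [_ [P2 _]]]. exact P2.
    + replace (2 * m + 1)%nat with (S (2 * m)) by lia.
      replace (S (S (2 * m))) with (2 * S m)%nat by lia.
      destruct (LE (S m)) as [-> ->]. destruct (LO m) as [-> ->].
      destruct (Hs m) as [_ [P1 _]]. exact P1.
  - exists 0%nat. intros j _. destruct (Nat.Even_or_Odd j) as [[m ->]|[m ->]].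
    + destruct (LE m) as [-> ->]. destruct (Hs m) as [[I1 [I2 I3]] _]. exact I2.
    + replace (2 * m + 1)%nat with (S (2 * m)) by lia.
      destruct (LO m) as [-> ->]. destruct (Hs m) as [_ [_ [_ [P3 [P4 _]]]]]. exact P4.
  - destruct (choice_ab (fun j => SplitAt f (Lf j) (Rf j))
      (fun j a' b' => 0 <= a' /\ a' < b' /\ b' <= 1 /\
        (forall x, Icc a' b' x -> Icc (Lf j) (Rf j) x -> x = Lf j \/ x = Rf j) /\
        (forall y, (exists x, Icc a' b' x /\ f x = y) <-> (exists x, Icc (Lf j) (Rf j) x /\ f x = y))))
      as [a' [b' Hab']].
    { intros j H. exact H. }
    exists (fun j => SplitAt f (Lf j) (Rf j)), a', b'. split; [|exact Hab'].
    intros M. destruct (Hinf (N0 + M + 1)%nat) as [n [Hn HNs]].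
    set (m := (n - N0 - 1)%nat).
    assert (Em : S (N0 + m) = n) by (unfold m; lia).
    destruct (Hs m) as [_ [_ [_ [_ [_ [_ P6]]]]]]. rewrite Em in P6.
    destruct (P6 HNs) as [HY|HX].
    + exists (S (2 * m)). split; [unfold m; lia|]. destruct (LO m) as [-> ->]. exact HY.
    + exists (2 * S m)%nat. split; [unfold m; lia|]. destruct (LE (S m)) as [-> ->]. exact HX.
Qed.

Lemma fwd_p f l r (p : nat) : tight f l r ->
  forall (Ns : nat -> Prop) (a b : nat -> R),
  (forall n, Ns n ->
       0 <= a n /\ a n < b n /\ b n <= 1 /\
       (forall x, Icc (a n) (b n) x -> Icc (l n) (r n) x -> x = l n \/ x = r n) /\
       (forall y, (exists x, Icc (a n) (b n) x /\ f x = y) <->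
                  (exists x, Icc (l n) (r n) x /\ f x = y))) ->
  (forall m, exists k, (m <= k)%nat /\ Ns (2 * k + p)%nat) ->
  admits_splitting_sequence (fun x => f (f x)).
Proof.
  intros [Hprop [Himg [N0 HN0]]] Ns a b Hsp Hinf.
  exists (fun k => l (2 * k + p)%nat), (fun k => r (2 * k + p)%nat).
  split; [split; [|split]|].
  - intros k. apply Hprop.
  - intros k. replace (2 * S k + p)%nat with (S (S (2 * k + p))) by lia.
    intros y. rewrite (img_comp f _ _ _ _ y (Himg _)). apply Himg.
  - exists N0. intros n Hn. apply HN0. lia.
  - exists (fun k => Ns (2 * k + p)%nat), (fun k => a (2 * k + p)%nat), (fun k => b (2 * k + p)%nat).
    split; auto.
    intros n Hn. destruct (Hsp _ Hn) as [C1 [C2 [C3 [C4 C5]]]].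
    split; auto. split; auto. split; auto. split; auto.
    intros y. split.
    + intros [x [Hx Hxy]]. destruct (proj1 (C5 (f x))) as [x' [Hx' E]]. exists x; auto.
      exists x'. split; auto. rewrite E; auto.
    + intros [x [Hx Hxy]]. destruct (proj2 (C5 (f x))) as [x' [Hx' E]]. exists x; auto.
      exists x'. split; auto. rewrite E; auto.
Qed.

Lemma fwd f : admits_splitting_sequence f -> admits_splitting_sequence (fun x => f (f x)).
Proof.
  intros [l [r [Ht [Ns [a [b [Hinf Hsp]]]]]]].
  destruct (classic (forall m, exists k, (m <= k)%nat /\ Ns (2 * k + 0)%nat)) as [H|H].
  - exact (fwd_p f l r 0 Ht Ns a b Hsp H).
  - apply (fwd_p f l r 1 Ht Ns a b Hsp).
    apply not_all_ex_not in H. destruct H as [m0 H].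
    intros m. destruct (Hinf (2 * (m + m0) + 1)%nat) as [n [Hn HNs]].
    destruct (Nat.Even_or_Odd n) as [[k ->]|[k ->]].
    + exfalso. apply H. exists k. split; [lia|]. rewrite Nat.add_0_r. auto.
    + exists k. split; [lia|]. auto.
Qed.

Theorem lemma3p15 (f : R -> R) (hc : cont01 f) (hs : surj01 f) :
  admits_splitting_sequence f <-> admits_splitting_sequence (fun x => f (f x)).
Proof. split; [apply fwd | apply back; auto]. Qed.
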